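(* Let $n\ge 2$ be an integer and let $\boldsymbol{Z}$ be a finite E-subspace of the $n$-abomination $\mathbb{X}_n$ with an E-partition $R$ such that $\boldsymbol{Z}/R$ is $n$-colorable. Then for every $m\in\mathbb{N}$, if $c_{m,0},\dots,c_{m,2^{n+1}-1}\in Z$, there are $i<j$ such that $\langle c_{m,i},c_{m,j}\rangle\in R$.
   Context: $\mathbb{N}=\{0,1,2,\dots\}$. Fix an integer $n\ge 2$ and put $N=2^{n+1}-1$. Let $T_n$ be the set of triples $\langle k_1,k_2,k_3\rangle$ of pairwise distinct natural numbers $\le N$, with a fixed enumeration $T_n=\{s_0,\dots,s_t\}$. Let $U_n$ be a set of pairwise distinct elements $a_m,b_m$ ($m\in\mathbb{N}$) and $c_{m,k},d_{m,k},e^a_{m,k},e^b_{m,k}$ ($m\in\mathbb{N}$, $0\le k\le N$). Define $x\prec y$ on $U_n$ iff one of: (1) $x=a_m$ and $y\in\{c_{m,k_1},c_{m,k_2}\}$, where $s_j=\langle k_1,k_2,k_3\rangle$ with $j\equiv m \bmod (t+1)$; (2) $x=b_m$ and $y\in\{c_{m,k_1},c_{m,k_3}\}$, with $s_j$ as in (1); (3) $m\ge1$, $x=c_{m,k}$, and either $y=e^a_{m-1,j}$ with $j\ne k$, or $y=e^b_{m-1,i}$ for any $i\le N$; (4) $x=d_{m,k}$ and $y=c_{m,j}$ with $j\neq k$; (5) $x=e^a_{m,k}$ and either $y=a_m$ or $y=d_{m,j}$ with $j\ne k$; (6) $x=e^b_{m,k}$ and either $y=b_m$ or $y=d_{m,j}$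 with $j\ne k$. Let $\le$ be the reflexive transitive closure of $\prec$. The $n$-abomination $\mathbb{X}_n$ is the poset $U_n\cup\{\bot\}$ where $\bot$ is a new least element, with the topology in which $U$ is open iff $\bot\notin U$ or $U$ is cofinite; it is an Esakia space. An E-subspace is a closed upset with induced topology and order. An E-partition on an Esakia space $\mathbb{X}$ is an equivalence relation $R$ such that (a) if $\langle x,y\rangle\in R$ and $x\le z$ then there is $w\ge y$ with $\langle z,w\rangle\in R$; (b) if $\langle x,y\rangle\notin R$ there is a clopen union of $R$-classes containing $x$ but not $y$. The quotient $\mathbb{X}/R$ carries the quotient topology and the order $x/R\sqsubseteq y/R$ iff $x'\le y'$ for some $x'\in x/R$, $y'\in y/R$. With $\{0,1\}^n$ ordered componentwise, a weak $n$-coloring of an Esakia space is an order-preserving map into $\{0,1\}^n$ whose fibres are clopen; it is an $n$-coloring if every E-partition other than the identity relates two elements of distinct color; a space is $n$-colorable if it admits an $n$-coloring. *)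

(* Defs.v *)
From Stdlib Require Import Relation_Operators List.
From mathcomp Require Import all_boot.

Set Implicit Arguments.
Unset Strict Implicit.
Unset Printing Implicit Defensive.

Record ESpace := MkESpace {
  pt :> Type;
  ele : pt -> pt -> Prop;
  eopen : (pt -> Prop) -> Prop
}.

Definition clopen (X : ESpace) (U : X -> Prop) : Prop :=
  eopen U /\ eopen (fun x => ~ U x).

Definition E_partition (X : ESpace) (R : X -> X -> Prop) : Prop :=
  [/\ (forall x, R x x),
      (forall x y, R x y -> R y x),
      (forall x y z, R x y -> R y z -> R x z),
      (forall x y z, R x y -> ele x z -> exists2 w, ele y w & R z w)
    & (forall x y, ~ R x y ->
         exists U : X -> Prop,
           [/\ clopen U, (forall u v, R u v -> U u -> U v), U x & ~ U y])].

Definition upset (X : ESpace) (Z : X -> Prop) : Prop :=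
  forall x y, Z x -> ele x y -> Z y.

Definition closed (X : ESpace) (Z : X -> Prop) : Prop :=
  eopen (fun x => ~ Z x).

Definition E_subspace (X : ESpace) (Z : X -> Prop) : Prop :=
  closed Z /\ upset Z.

Definition subspace (X : ESpace) (Z : X -> Prop) : ESpace :=
  @MkESpace {x : X | Z x}
    (fun u v => ele (proj1_sig u) (proj1_sig v))
    (fun W => exists V : X -> Prop, eopen V /\ forall u, W u <-> V (proj1_sig u)).

Definition qpt (X : ESpace) (R : X -> X -> Prop) : Type :=
  {P : X -> Prop | exists x, P = R x}.

Definition qproj (X : ESpace) (R : X -> X -> Prop) (x : X) : qpt R :=
  exist _ (R x) (ex_intro _ x erefl).

Definition quotient (X : ESpace) (R : X -> X -> Prop) : ESpace :=
  @MkESpace (qpt R)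
    (fun P Q => exists x' y', proj1_sig P x' /\ proj1_sig Q y' /\ ele x' y')
    (fun W => eopen (fun x => W (qproj R x))).

Definition weak_coloring (n : nat) (X : ESpace) (f : X -> n.-tuple bool) : Prop :=
  (forall x y, ele x y -> forall i : 'I_n, tnth (f x) i ==> tnth (f y) i) /\
  (forall v : n.-tuple bool, clopen (fun x => f x = v)).

Definition coloring (n : nat) (X : ESpace) (f : X -> n.-tuple bool) : Prop :=
  weak_coloring f /\
  forall S : X -> X -> Prop, E_partition S ->
    (exists x y, S x y /\ x <> y) ->
    exists x y, S x y /\ f x <> f y.

Definition colorable (n : nat) (X : ESpace) : Prop :=
  exists f : X -> n.-tuple bool, coloring f.

(* N = 2^(n+1) - 1; indices k with 0 <= k <= N are ordinals of 'I_(2^(n+1)). *)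
Definition Nab (n : nat) : nat := 2 ^ n.+1 - 1.

Inductive abpt (n : nat) : Type :=
| Bot
| Pa : nat -> abpt n
| Pb : nat -> abpt n
| Pc : nat -> 'I_(2 ^ n.+1) -> abpt n
| Pd : nat -> 'I_(2 ^ n.+1) -> abpt n
| Pea : nat -> 'I_(2 ^ n.+1) -> abpt n
| Peb : nat -> 'I_(2 ^ n.+1) -> abpt n.

Arguments Bot {n}.

(* A valid enumeration s_0, ..., s_t of T_n (as a duplicate-free list). *)
Definition triple_ok (n : nat) (t : nat * nat * nat) : bool :=
  let: (k1, k2, k3) := t in
  [&& k1 <= Nab n, k2 <= Nab n, k3 <= Nab n,
      k1 != k2, k1 != k3 & k2 != k3].

Definition enumeration_of_T (n : nat) (s : seq (nat * nat * nat)) : Prop :=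
  uniq s /\ forall t, (t \in s) = triple_ok n t.

(* s_j with j = m mod (t+1) *)
Definition sj (s : seq (nat * nat * nat)) (m : nat) : nat * nat * nat :=
  nth (0, 0, 0) s (m %% size s).

Definition prec (n : nat) (s : seq (nat * nat * nat)) (x y : abpt n) : Prop :=
  match x, y with
  | Pa m, Pc m' k => m' = m /\
      let: (k1, k2, k3) := sj s m in (val k = k1 \/ val k = k2)
  | Pb m, Pc m' k => m' = m /\
      let: (k1, k2, k3) := sj s m in (val k = k1 \/ val k = k3)
  | Pc m k, Pea m' j => m = m'.+1 /\ j <> k
  | Pc m k, Peb m' i => m = m'.+1
  | Pd m k, Pc m' j => m' = m /\ j <> k
  | Pea m k, Pa m' => m' = m
  | Pea m k, Pd m' j => m' = m /\ j <> k
  | Peb m k, Pb m' => m' = m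
  | Peb m k, Pd m' j => m' = m /\ j <> k
  | _, _ => False
  end.

Definition ab_le (n : nat) (s : seq (nat * nat * nat)) (x y : abpt n) : Prop :=
  x = Bot \/ clos_refl_trans (abpt n) (prec s) x y.

Definition ab_open (n : nat) (U : abpt n -> Prop) : Prop :=
  ~ U Bot \/ exists l : list (abpt n), forall x, ~ U x -> List.In x l.

Definition abomination (n : nat) (s : seq (nat * nat * nat)) : ESpace :=
  @MkESpace (abpt n) (ab_le s) (@ab_open n).

Definition finite_set (T : Type) (Z : T -> Prop) : Prop :=
  exists l : list T, forall x, Z x -> List.In x l.

(* Main.v *)
Require Import Defs.
From Stdlib Require Import Relation_Operators Operators_Properties Classical ProofIrrelevance FunctionalExtensionality PropExtensionality ClassicalEpsilon.
From mathcomp Require Import all_boot.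
From mathcomp Require Import zify.
Set Implicit Arguments.
Unset Strict Implicit.
Unset Printing Implicit Defensive.


Lemma other1 (I : finType) (j : I) : 1 < #|I| -> exists k, k != j.
Proof.
move=> h.
have : 0 < #|[set: I] :\ j|.
  have e := cardsD1 j [set: I]; rewrite cardsT inE in e; lia.
case/card_gt0P => k; rewrite !inE andbT => hk; by exists k.
Qed.

Lemma other2 (I : finType) (a b : I) : 2 < #|I| -> exists k, k != a /\ k != b.
Proof.
move=> h.
have : 0 < #|[set: I] :\ a :\ b|.
  have := cardsD1 b ([set: I] :\ a); have := cardsD1 a [set: I].
  rewrite cardsT; case: (_ \in _); case: (_ \in _); lia.
case/card_gt0P => k; rewrite !inE andbT => /andP [hb ha]; by exists k.
Qed.

Definition Gn (I T : finType) (G : {set I}) (g : I -> T) : {set I} :=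
  [set i in G | [exists j in G, (j != i) && (g i == g j)]].

Lemma pig (I T : finType) (G : {set I}) (g : I -> T) :
  #|g @: G| < #|G| -> #|G| < #|Gn G g| + #|g @: G|.
Proof.
move=> hlt.
set G' := Gn G g; set H := G :\: G'.
have sG' : G' \subset G by apply/subsetP => x; rewrite inE => /andP [].
have inG' : forall i j, i \in G -> j \in G -> j != i -> g i = g j -> i \in G'.
  move=> i j iG jG ne e; rewrite inE iG /=; apply/existsP; exists j.
  by rewrite jG ne e eqxx.
have inj : {in H &, injective g}.
  move=> i j; rewrite !in_setD => /andP [ni iG] /andP [nj jG] e.
  apply/eqP; apply: contraNT ni => ne.
  apply: (inG' i j iG jG _ e); by rewrite eq_sym.
have disj : g @: H :&: g @: G' = set0.
  apply/setP => y; rewrite !inE; apply/negbTE/negP => /andP [/imsetP [i iH ->] /imsetP [j jG' e]].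
  move: iH; rewrite in_setD => /andP [ni iG].
  have jG : j \in G by apply: (subsetP sG').
  have ne : j != i by apply/eqP => ji; move: ni; rewrite -ji jG'.
  by move: ni; rewrite (inG' i j iG jG ne e).
have eG : G = G' :|: H by rewrite /H -{1}(setID G G') (setIidPr sG').
have cG : #|G| = #|G'| + #|H|.
  by rewrite /H -(cardsID G' G) (setIidPr sG').
have cimg : #|g @: G| = #|g @: G'| + #|H|.
  rewrite {1}eG imsetU cardsU setIC disj cards0 subn0 (card_in_imset inj) //.
have ne : G' != set0.
  apply/negP => /eqP e0; move: hlt; rewrite cimg cG e0 imset0 !cards0; lia.
case/set0Pn: ne => x xG'.
have : 0 < #|g @: G'| by apply/card_gt0P; exists (g x); apply: imset_f.
have := leq_imset_card g G'.
rewrite cimg cG; lia.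
Qed.

Definition Tset n (I : finType) (g : I -> {set 'I_n}) : {set 'I_n} :=
  [set i | [forall k, i \in g k]].
Definition Zer n (I : finType) (g : I -> {set 'I_n}) (i : 'I_n) : {set I} :=
  [set k | i \notin g k].
Definition Sig n (I : finType) (g : I -> {set 'I_n}) : {set 'I_n} :=
  [set i | #|Zer g i| == 1].
Definition Psi n (I : finType) (g : I -> {set 'I_n}) : nat :=
  2 ^ #|Tset g| + #|Tset g| + #|Sig g|.

Lemma Psi_gt0 n (I : finType) (g : I -> {set 'I_n}) : 0 < Psi g.
Proof. rewrite /Psi; have := expn_gt0 2 #|Tset g|; lia. Qed.

Lemma SI n (I : finType) (g h : I -> {set 'I_n}) :
  2 < #|I| -> (forall k j, k != j -> h k \subset g j) ->
  #|h @: setT| + Psi h <= Psi g + 1.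
Proof.
move=> hI hm.
have sub1 : Tset h \subset Tset g.
  apply/subsetP => i; rewrite !inE => /forallP Hh; apply/forallP => j.
  have [k hk] := other1 j (ltnW hI).
  exact: (subsetP (hm _ _ hk)) _ (Hh k).
have sub2 : Sig h \subset Tset g :\: Tset h.
  apply/subsetP => i; rewrite !inE => /eqP H1.
  have [k0 k0Z] : exists k0, k0 \in Zer h i.
    by apply/card_gt0P; rewrite H1.
  move: k0Z; rewrite inE => ni.
  apply/andP; split.
    apply/negP => /forallP F; by move: ni; rewrite F.
  apply/forallP => j0; apply/negPn/negP => nj0.
  have : [set: I] :\ j0 \subset Zer h i.
    apply/subsetP => k; rewrite !inE andbT => kj.
    apply/negP => ik; move/negP: nj0; apply; exact: (subsetP (hm _ _ kj)) _ ik.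
  move/subset_leq_card; rewrite H1.
  have e := cardsD1 j0 [set: I]; rewrite cardsT inE in e; lia.
have cs2 : #|Sig h| <= #|Tset g| - #|Tset h|.
  by rewrite -(cardsDS sub1); apply: subset_leq_card.
have cs1 : #|Tset h| <= #|Tset g| by apply: subset_leq_card.
have hm' : forall k j, j != k -> h k \subset g j by move=> k j; rewrite eq_sym; apply: hm.
set K1 := [set k | ~~ (h k \subset Tset g)].
have [k0 _] : exists k0 : I, true.
  by case/card_gt0P: (ltnW (ltnW hI)) => x _; exists x.
pose zeta (i : 'I_n) := odflt k0 [pick k in Zer g i].
have cK1 : #|K1| <= #|Sig g|.
  apply: (leq_trans _ (leq_imset_card zeta _)); apply: subset_leq_card.
  apply/subsetP => k; rewrite inE => /subsetPn [i ihk nig].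
  have eZ : Zer g i = [set k].
    apply/setP => j; rewrite !inE.
    case: (eqVneq j k) => [->|jk].
      apply/negP => ig; move/negP: nig; apply; rewrite inE; apply/forallP => j'.
      case: (eqVneq j' k) => [->//|jk']; exact: (subsetP (hm' _ _ jk')) _ ihk.
    by rewrite (subsetP (hm' _ _ jk) _ ihk) ?(negbTE jk).
  apply/imsetP; exists i; first by rewrite inE eZ cards1.
  rewrite /zeta; case: pickP => [k' | /(_ k)]; rewrite eZ inE ?eqxx //.
  by move/eqP ->.
set D := Tset g :\: Tset h.
have cK0 : #|h @: ~: K1| <= 2 ^ (#|Tset g| - #|Tset h|).
  have key : forall k, k \in ~: K1 -> forall x, (x \in h k) = (x \in Tset h) || (x \in h k :&: D).
    move=> k kK x; have sk : h k \subset Tset g by move: kK; rewrite !inE negbK.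
    case xT: (x \in Tset h).
      by move: xT; rewrite inE => /forallP ->.
    rewrite /= in_setI /D in_setD xT /=.
    by case xh: (x \in h k) => //; rewrite (subsetP sk).
  have inj : {in h @: ~: K1 &, injective (fun S => S :&: D)}.
    move=> S1 S2 /imsetP [k1 k1K ->] /imsetP [k2 k2K ->] e.
    by apply/setP => x; rewrite (key _ k1K) (key _ k2K) e.
  rewrite -(card_in_imset inj) -(cardsDS sub1) -card_powerset.
  apply: subset_leq_card; apply/subsetP => S /imsetP [S' _ ->].
  by rewrite powersetE subsetIr.
have cimg : #|h @: setT| <= #|h @: ~: K1| + #|h @: K1|.
  rewrite -(setUCr K1) setUC imsetU cardsU; lia.
have := leq_imset_card h K1.
have e2 : 2 ^ #|Tset g| = 2 ^ (#|Tset g| - #|Tset h|) * 2 ^ #|Tset h|.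
  by rewrite -expnD subnK.
have p1 := expn_gt0 2 (#|Tset g| - #|Tset h|).
have p2 := expn_gt0 2 #|Tset h|.
rewrite /Psi e2; nia.
Qed.

Fixpoint Gs n (I : finType) (col : nat -> I -> {set 'I_n}) (t : nat) : {set I} :=
  match t with
  | 0 => Gn [set: I] (col 0)
  | t'.+1 => Gn (Gs col t') (col t'.+1)
  end.

Lemma comb n T (I : finType) (hn : 1 <= n) (hI : #|I| = 2 ^ n.+1)
  (col : nat -> I -> {set 'I_n}) (M : nat -> I -> I -> Prop)
  (mono : forall t k j, t < T -> k != j -> col t.+1 k \subset col t j)
  (H0 : forall i j, i != j -> col 0 i = col 0 j -> M 0 i j)
  (HS : forall t i j i' j', t < T -> i != j -> i' != i -> j' != j ->
          M t i i' -> M t j j' -> col t.+1 i = col t.+1 j -> M t.+1 i j) :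
  exists i j, i != j /\ M T i j.
Proof.
have h2n : n.+1 < 2 ^ n.+1 by apply: ltn_expl.
have hn2 : n < 2 ^ n by apply: ltn_expl.
have e2 : 2 ^ n.+1 = 2 * 2 ^ n by rewrite expnS.
have hI3 : 2 < #|I| by rewrite hI; have := leq_pexp2l (isT : 0 < 2) hn; rewrite expn1 => h; lia.
have inv : forall t, t <= T -> Psi (col t) < #|Gs col t|.
  elim=> [_ | t IH hT] /=.
    have := SI (g := fun _ => [set: 'I_n]) (h := col 0) hI3 (fun _ _ _ => subsetT _).
    have hP : Psi (fun _ : I => [set: 'I_n]) <= 2 ^ n + n.
      rewrite /Psi.
      have -> : Sig (fun _ : I => [set: 'I_n]) = set0.
        apply/setP => i; rewrite !inE.
        have -> : Zer (fun _ : I => [set: 'I_n]) i = set0 by apply/setP => k; rewrite !inE.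
        by rewrite cards0.
      rewrite cards0 addn0.
      have c : #|Tset (fun _ : I => [set: 'I_n])| <= n.
        by apply: (leq_trans (max_card _)); rewrite card_ord.
      have := leq_pexp2l (isT : 0 < 2) c; lia.
    have p0 := Psi_gt0 (col 0).
    move=> hS.
    have hlt : #|col 0 @: [set: I]| < #|[set: I]| by rewrite cardsT hI; lia.
    have := pig hlt; rewrite cardsT hI; lia.
  have IH' := IH (ltnW hT).
  have := SI hI3 (fun k j => mono t k j hT).
  have p1 := Psi_gt0 (col t.+1).
  have sub : #|col t.+1 @: Gs col t| <= #|col t.+1 @: [set: I]|.
    by apply: subset_leq_card; apply: imsetS; apply: subsetT.
  move=> hS.
  have hlt : #|col t.+1 @: Gs col t| < #|Gs col t| by lia.
  have := pig hlt; lia.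
have sound : forall t, t <= T -> forall i, i \in Gs col t -> exists j, j != i /\ M t i j.
  elim=> [_ | t IH hT] i /=; rewrite inE => /andP [iG /existsP [j /andP [jG /andP [ji /eqP e]]]].
    exists j; split => //; apply: H0 => //; by rewrite eq_sym.
  exists j; split => //.
  have [i' [i'i Mi]] := IH (ltnW hT) i iG.
  have [j' [j'j Mj]] := IH (ltnW hT) j jG.
  apply: (HS t i j i' j') => //; by rewrite eq_sym.
have := inv T (leqnn T); have := Psi_gt0 (col T) => p0 hc.
have [i iG] : exists i, i \in Gs col T by apply/card_gt0P; lia.
have [j [ji Mj]] := sound T (leqnn T) i iG.
exists i, j; split => //; by rewrite eq_sym.
Qed.

Definition fam n (t : nat) (k : 'I_(2 ^ n.+1)) : abpt n :=
  if t %% 3 == 0 then Pc (t %/ 3) k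
  else if t %% 3 == 1 then Pd (t %/ 3) k else Pea (t %/ 3) k.
Arguments fam : clear implicits.

Lemma fam_cases n t :
  (exists p, fam n t = @Pc n p /\ fam n t.+1 = @Pd n p) \/
  (exists p, fam n t = @Pd n p /\ fam n t.+1 = @Pea n p) \/
  (exists p, fam n t = @Pea n p /\ fam n t.+1 = @Pc n p.+1).
Proof.
rewrite /fam.
have : t %% 3 < 3 by rewrite ltn_mod.
case e: (t %% 3) => [|[|[|r]]] // _.
- left; exists (t %/ 3); split => //.
  have -> : t.+1 %% 3 = 1 by lia.
  have -> : t.+1 %/ 3 = t %/ 3 by lia.
  by [].
- right; left; exists (t %/ 3); split => //.
  have -> : t.+1 %% 3 = 2 by lia.
  have -> : t.+1 %/ 3 = t %/ 3 by lia.
  by [].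
- right; right; exists (t %/ 3); split => //.
  have -> : t.+1 %% 3 = 0 by lia.
  have -> : t.+1 %/ 3 = (t %/ 3).+1 by lia.
  by [].
Qed.

Lemma fam0 n k : fam n 0 k = Pc 0 k.
Proof. by []. Qed.

Lemma fam3 n m k : fam n (3 * m) k = Pc m k.
Proof.
rewrite /fam.
have -> : (3 * m) %% 3 = 0 by lia.
have -> : (3 * m) %/ 3 = m by lia.
by [].
Qed.

Lemma prec_fam n s t (j k : 'I_(2 ^ n.+1)) : j != k -> prec s (fam n t.+1 j) (fam n t k).
Proof.
move=> /eqP jk.
case: (fam_cases n t) => [[p [-> ->]]|[[p [-> ->]]|[p [-> ->]]]] /=; split => //; by move=> e; apply: jk.
Qed.

Lemma other2o N (a b : 'I_N) : 2 < N -> exists c : 'I_N, c <> a /\ c <> b.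
Proof.
move=> h.
have : 0 < #|[set: 'I_N] :\ a :\ b|.
  have := cardsD1 b ([set: 'I_N] :\ a); have := cardsD1 a [set: 'I_N].
  rewrite cardsT card_ord => e1 e2.
  have := leq_b1 (a \in [set: 'I_N]); have := leq_b1 (b \in [set: 'I_N] :\ a).
  move=> l1 l2; move: e1 e2 l1 l2.
  set x1 := #|[set: 'I_N] :\ a|; set x2 := #|[set: 'I_N] :\ a :\ b|.
  set b1 := nat_of_bool _; set b2 := nat_of_bool _; lia.
case/card_gt0P => k; rewrite !inE andbT => /andP [/eqP hb /eqP ha]; by exists k.
Qed.

Lemma crt_first T (r : T -> T -> Prop) x y :
  clos_refl_trans T r x y -> y <> x -> exists2 z, r x z & clos_refl_trans T r z y.
Proof.
move=> H; case: (proj1 (clos_rt_rt1n_iff _ _ _ _) H) => [|z w hz hzy] ne.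
  by case: ne.
by exists z => //; apply: (proj2 (clos_rt_rt1n_iff _ _ _ _)).
Qed.

Lemma crt_cons T (r : T -> T -> Prop) x y z :
  r x y -> clos_refl_trans T r y z -> clos_refl_trans T r x z.
Proof. move=> h1 h2; apply: rt_trans h2; exact: rt_step. Qed.

Lemma F2 n s t (j k : 'I_(2 ^ n.+1)) (y : abpt n) : 2 < 2 ^ n.+1 -> j != k ->
  ab_le s (fam n t.+1 j) y -> y <> fam n t.+1 j -> y <> fam n t k ->
  clos_refl_trans _ (prec s) (fam n t.+1 k) y.
Proof.
move=> h2 /eqP jk [hb|H] ny1 ny0.
  by case: (fam_cases n t) hb => [[p [_ ->]]|[[p [_ ->]]|[p [_ ->]]]].
have [z hz zy] := crt_first H ny1.
case: (fam_cases n t) ny0 ny1 hz => [[p [e0 e1]]|[[p [e0 e1]]|[p [e0 e1]]]];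
  rewrite e0 e1 => ny0 ny1 hz.
- case: z hz zy => // p' l [-> lj] zy.
  case: (eqVneq l k) => [elk | lk]; last first.
    apply: crt_cons zy; split => //; by move=> e; move/eqP: lk; rewrite e.
  subst l.
  have [z' hz' z'y] := crt_first zy ny0.
  case: z' hz' z'y => //; [move=> p2 l' [ep l'k] z'y | move=> p2 i ep z'y].
    have [c [ck cl']] := other2o k l' h2.
    apply: (@crt_cons _ _ _ (Pc p c)); first by split.
    apply: crt_cons z'y; split => // e; by apply: cl'.
  have [c [ck _]] := other2o k k h2.
  apply: (@crt_cons _ _ _ (Pc p c)); first by split.
  by apply: crt_cons z'y.
- case: z hz zy => //; [move=> p' hz zy | move=> p' l [ep lj] zy]; subst.
    by apply: crt_cons zy; rewrite hz.
  case: (eqVneq l k) => [elk | lk]; last first.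
    apply: crt_cons zy; split => //; by move=> e; move/eqP: lk; rewrite e.
  subst l.
  have [z' hz' z'y] := crt_first zy ny0.
  case: z' hz' z'y => // p2 l' [ep l'k] z'y; subst.
  have [c [ck cl']] := other2o k l' h2.
  apply: (@crt_cons _ _ _ (Pd _ c)); first by split.
  apply: crt_cons z'y; split => // e; by apply: cl'.
- case: z hz zy => //; [move=> p' l [ep lj] zy | move=> p' i ep zy]; last first.
    by apply: crt_cons zy.
  case: ep => ep; subst p'.
  case: (eqVneq l k) => [elk | lk]; last first.
    apply: crt_cons zy; split => //; by move=> e; move/eqP: lk; rewrite e.
  subst l.
  have [z' hz' z'y] := crt_first zy ny0.
  case: z' hz' z'y => //; [move=> p2 hz' z'y | move=> p2 l' [ep l'k] z'y]; subst.
    have [c [ck _]] := other2o k k h2.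
    apply: (@crt_cons _ _ _ (Pea _ c)); first by split.
    by apply: crt_cons z'y.
  have [c [ck cl']] := other2o k l' h2.
  apply: (@crt_cons _ _ _ (Pea _ c)); first by split.
  apply: crt_cons z'y; split => // e; by apply: cl'.
Qed.

Lemma fam0_max n s k (y : abpt n) : ab_le s (fam n 0 k) y -> y = fam n 0 k.
Proof.
rewrite fam0 => [[//|H]].
case: (classic (y = Pc 0 k)) => // ne.
have [z hz _] := crt_first H ne.
by case: z hz => // ? ? [].
Qed.

Lemma qeq (X : ESpace) (R : X -> X -> Prop) (P Q : qpt R) :
  proj1_sig P = proj1_sig Q -> P = Q.
Proof.
case: P => P hP; case: Q => Q hQ /= e; subst Q; f_equal; apply: proof_irrelevance.
Qed.

Lemma qproj_eq (X : ESpace) (R : X -> X -> Prop) (hR : E_partition R) u v :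
  R u v -> qproj R u = qproj R v.
Proof.
case: hR => rf sy tr _ _ huv; apply: qeq => /=.
apply: functional_extensionality => w; apply: propositional_extensionality; split.
  by move=> h; apply: tr (sy _ _ huv) h.
by move=> h; apply: tr huv h.
Qed.

Lemma qproj_R (X : ESpace) (R : X -> X -> Prop) (hR : E_partition R) u v :
  qproj R u = qproj R v -> R u v.
Proof.
case: hR => rf _ _ _ _ e.
have e' : R u = R v by exact: (f_equal (@proj1_sig _ _) e).
by rewrite e'; apply: rf.
Qed.

Lemma Q_up (X : ESpace) (R : X -> X -> Prop) (hR : E_partition R) u (P : quotient R) :
  @ele (quotient R) (qproj R u) P -> exists2 v, ele u v & P = qproj R v.
Proof.
case: (hR) => rf sy tr ha _.
case: P => P [p0 eP] [x' [y' [/= ux' [Py' xy']]]].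
have [w uw yw] := ha _ _ _ (sy _ _ ux') xy'.
exists w => //; apply: qeq => /=; subst P.
apply: functional_extensionality => z; apply: propositional_extensionality; split.
  move=> h; apply: tr (sy _ _ (tr _ _ _ Py' yw)) h.
move=> h; apply: tr (tr _ _ _ Py' yw) h.
Qed.

Lemma Q_ele (X : ESpace) (R : X -> X -> Prop) (hR : E_partition R) u v :
  ele u v -> @ele (quotient R) (qproj R u) (qproj R v).
Proof.
case: hR => rf _ _ _ _ h; exists u, v; split => //=.
Qed.

Lemma Q_refl (X : ESpace) (R : X -> X -> Prop) (hR : E_partition R)
  (hrefl : forall x : X, ele x x) (P : quotient R) : ele P P.
Proof.
case: hR => rf _ _ _ _.
case: P => P [p0 eP]; exists p0, p0; subst P; split => //; split => //; apply: hrefl.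
Qed.

Lemma merge n (Y : ESpace) (f : Y -> n.-tuple bool) (hf : coloring f)
  (hcl : forall U : Y -> Prop, clopen U) (hrefl : forall P : Y, ele P P)
  (P1 P2 : Y) : f P1 = f P2 ->
  (forall Q, Q <> P1 -> Q <> P2 -> ele P1 Q -> ele P2 Q) ->
  (forall Q, Q <> P1 -> Q <> P2 -> ele P2 Q -> ele P1 Q) -> P1 = P2.
Proof.
move=> ef h12 h21.
case: (classic (P1 = P2)) => // ne.
pose S (x y : Y) := x = y \/ (x = P1 /\ y = P2) \/ (x = P2 /\ y = P1).
have Str : forall x y z, S x y -> S y z -> S x z.
  rewrite /S => x y z [->|[[-> ->]|[-> ->]]] [->|[[e ->]|[e ->]]]; subst; tauto.
have hS : E_partition S.
  split.
  - by move=> x; left.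
  - rewrite /S => x y [->|[[-> ->]|[-> ->]]]; tauto.
  - exact: Str.
  - rewrite /S => x y z [<-|[[-> ->]|[-> ->]]] xz.
    + by exists z => //; left.
    + case: (classic (z = P1)) => [->|z1].
        by exists P2; [apply: hrefl | right; left].
      case: (classic (z = P2)) => [->|z2].
        by exists P2; [apply: hrefl | left].
      by exists z; [apply: h12 | left].
    + case: (classic (z = P2)) => [->|z2].
        by exists P1; [apply: hrefl | right; right].
      case: (classic (z = P1)) => [->|z1].
        by exists P1; [apply: hrefl | left].
      by exists z; [apply: h21 | left].
  - move=> x y nxy; exists (S x); split => //.
    + by move=> u v uv xu; apply: Str xu uv.
    + by left.
have [x [y [sxy fxy]]] := hf.2 S hS (ex_intro _ P1 (ex_intro _ P2 (conj (or_intror (or_introl (conj erefl erefl))) ne))).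
by case: sxy fxy => [->|[[-> ->]|[-> ->]]] h; exfalso; apply: h.
Qed.

Lemma not_all_in n (l : list (abpt n)) : exists N, forall k, N <= k -> ~ List.In (@Pa n k) l.
Proof.
elim: l => [|x l [N HN]]; first by exists 0 => ? _ [].
exists (maxn N (if x is Pa j then j.+1 else 0)) => k hk [e|hin].
  subst x; move: hk; rewrite geq_max ltnn andbF //.
apply: (HN k) => //; move: hk; rewrite geq_max => /andP [] //.
Qed.

Lemma all_open n s (Z : abomination n s -> Prop) (hB : ~ Z Bot)
  (W : subspace Z -> Prop) : eopen W.
Proof.
exists (fun y => exists h : Z y, W (exist _ y h)); split.
  by left => [[h _]].
move=> [y h] /=; split; first by exists h.
by move=> [h' Hw]; rewrite (proof_irrelevance _ h h').
Qed.

Definition Zpt n s (Z : abomination n s -> Prop) (z0 : subspace Z) (x : abpt n) : subspace Z :=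
  match excluded_middle_informative (Z x) with
  | left h => exist _ x h
  | right _ => z0
  end.

Lemma Zpt_eq n s (Z : abomination n s -> Prop) (z0 : subspace Z) x (h : Z x) : Zpt z0 x = exist _ x h.
Proof.
rewrite /Zpt; case: excluded_middle_informative => [h'|//].
by rewrite (proof_irrelevance _ h h').
Qed.

Lemma Zpt_val n s (Z : abomination n s -> Prop) (z0 : subspace Z) x : Z x -> proj1_sig (Zpt z0 x) = x.
Proof. by move=> h; rewrite (Zpt_eq z0 h). Qed.

Lemma tset_inj n (u v : n.-tuple bool) :
  [set i | tnth u i] = [set i | tnth v i] -> u = v.
Proof.
move=> e; apply: eq_from_tnth => i.
have := congr1 (fun S : {set 'I_n} => i \in S) e; rewrite !inE /=.
by move=> ->.
Qed.

Theorem mainTheorem9 (n : nat) (s : seq (nat * nat * nat))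
  (hn : 2 <= n) (hs : enumeration_of_T n s)
  (Z : abomination n s -> Prop)
  (hZsub : E_subspace Z) (hZfin : finite_set Z)
  (R : subspace Z -> subspace Z -> Prop)
  (hR : E_partition R)
  (hcol : colorable n (quotient R)) :
  forall (m : nat) (hc : forall k : 'I_(2 ^ n.+1), Z (Pc m k)),
    exists i j : 'I_(2 ^ n.+1),
      (i < j)%N /\ R (exist _ (Pc m i) (hc i)) (exist _ (Pc m j) (hc j)).
Proof.
move=> m hc.
have h2 : 2 < 2 ^ n.+1.
  rewrite expnS; have := ltn_expl n (isT : 1 < 2); lia.
have hn1 : 1 <= n by lia.
case: hZsub => hclZ hup.
have hB : ~ Z Bot.
  move=> zb; case: hZfin => l hl; have [N HN] := not_all_in l.
  apply: (HN N (leqnn N)); apply: hl; apply: (hup Bot) zb _; by left.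
have Zfam : forall t, t <= 3 * m -> forall k, Z (fam n t k).
  suff H : forall d t, t + d = 3 * m -> forall k, Z (fam n t k).
    by move=> t ht; apply: (H (3 * m - t)); lia.
  elim=> [|d IH] t htd k.
    rewrite addn0 in htd; subst t; rewrite fam3; exact: hc.
  have [j [jk _]] := other2o k k h2.
  apply: (hup (fam n t.+1 j)); first by apply: IH; lia.
  right; apply: rt_step; apply: prec_fam; by apply/eqP.
pose k0 : 'I_(2 ^ n.+1) := Ordinal (ltnW (ltnW h2)).
pose z0 : subspace Z := exist _ (Pc m k0) (hc k0).
case: hcol => f hf.
have hcl' : forall U : quotient R -> Prop, clopen U.
  move=> U; split; [exact: (all_open hB (fun x => U (qproj R x))) | exact: (all_open hB (fun x => ~ U (qproj R x)))].
have hreflQ : forall P : quotient R, ele P P.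
  apply: Q_refl hR _ => x; right; exact: rt_refl.
pose Cl t k : quotient R := qproj R (Zpt z0 (fam n t k)).
pose col t k := [set i | tnth (f (Cl t k)) i].
have ZptV : forall t k, t <= 3 * m -> proj1_sig (Zpt z0 (fam n t k)) = fam n t k.
  by move=> t k ht; apply: Zpt_val; apply: Zfam.
have vZ : forall v : subspace Z, Zpt z0 (proj1_sig v) = v.
  by case=> x hx; rewrite (Zpt_eq z0 hx).
have eleCl : forall t j k, t < 3 * m -> j != k -> ele (Cl t.+1 j) (Cl t k).
  move=> t j k ht jk; apply: (Q_ele hR) => /=.
  rewrite !ZptV //; last by apply: ltnW.
  right; apply: rt_step; exact: prec_fam.
have mono : forall t k j, t < 3 * m -> k != j -> col t.+1 k \subset col t j.
  move=> t k j ht kj; apply/subsetP => i; rewrite !inE.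
  by move/implyP: (hf.1.1 _ _ (eleCl t k j ht kj) i).
have colf : forall t i j, col t i = col t j -> f (Cl t i) = f (Cl t j).
  by move=> t i j; apply: tset_inj.
have side0 : forall i Y, Y <> Cl 0 i -> ele (Cl 0 i) Y -> False.
  move=> i Y nY hY; have [v hv eY] := Q_up hR hY; apply: nY; rewrite eY.
  move: hv => /=; rewrite ZptV // => hv.
  by rewrite /Cl -(fam0_max hv) vZ.
have H0 : forall i j, i != j -> col 0 i = col 0 j -> Cl 0 i = Cl 0 j.
  move=> i j ij e; apply: (merge hf hcl' hreflQ (colf _ _ _ e)).
    by move=> Y Y1 _ hY; case: (side0 i Y Y1 hY).
  by move=> Y _ Y2 hY; case: (side0 j Y Y2 hY).
have side : forall t i j j', t < 3 * m -> i != j -> j' != j -> Cl t j = Cl t j' ->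
    forall Y, Y <> Cl t.+1 i -> ele (Cl t.+1 i) Y -> ele (Cl t.+1 j) Y.
  move=> t i j j' ht ij j'j Mj Y nY hY.
  have [v hv eY] := Q_up hR hY; rewrite eY; rewrite eY in nY.
  move: hv => /=; rewrite ZptV // => hv.
  case: (classic (proj1_sig v = fam n t.+1 i)) => e1.
    by case: nY; rewrite /Cl -e1 vZ.
  case: (classic (proj1_sig v = fam n t j)) => e2.
    have e3 : Cl t j' = qproj R v by rewrite -Mj /Cl -e2 vZ.
    have jj' : j != j' by rewrite eq_sym.
    have := eleCl t j j' ht jj'; rewrite e3; exact.
  apply: (Q_ele hR) => /=; rewrite ZptV //; right.
  exact: (F2 h2 ij hv e1 e2).
have HS : forall t i j i' j', t < 3 * m -> i != j -> i' != i -> j' != j ->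
    Cl t i = Cl t i' -> Cl t j = Cl t j' -> col t.+1 i = col t.+1 j -> Cl t.+1 i = Cl t.+1 j.
  move=> t i j i' j' ht ij i'i j'j Mi Mj e.
  apply: (merge hf hcl' hreflQ (colf _ _ _ e)).
    by move=> Y Y1 _; apply: (side t i j j').
  by move=> Y _ Y2; apply: (side t j i i') => //; rewrite eq_sym.
have [i [j [ij Mij]]] := comb (I := 'I_(2 ^ n.+1)) hn1 (card_ord _)
  (M := fun t i j => Cl t i = Cl t j) mono H0 HS.
have Rij := qproj_R hR Mij.
rewrite !fam3 !(Zpt_eq z0 (hc _)) in Rij.
case: (ltngtP i j) => [lt|gt|eq].
- by exists i, j.
- exists j, i; split => //; case: hR => _ sy _ _ _; exact: sy.
- by move: ij; rewrite (val_inj eq) eqxx.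
Qed.
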